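(* In the synchronous authenticated setting with $n$ parties of which at most $t<n/2$ are Byzantine, in the protocol ''Synchronous Crypto. $\frac{n}{2}$-BA'' described in the context, all honest parties output the same message.
   Context: Model: $n$ parties connected pairwise by reliable authenticated channels; a static, PPT (in security parameter $k$) adversary corrupts up to $t$ parties, which behave arbitrarily; others honest. Synchronous (known delay bound). Trusted setup: PKI and accumulator key $ak$. The claim holds except with probability negligible in $k$. A $j$-bit BA oracle is a subprotocol in which each party inputs a $j$-bit value and which guarantees: every honest party outputs; all honest parties output the same value; if all honest inputs equal $v$, the output is $v$. Reed–Solomon code: $\texttt{ENC}$ maps $b$ data symbols to $n$ codeword symbols, any $b$ of which determine the data; $\texttt{DEC}$ corrects $c$ errors and $d$ erasures whenever $n-b\ge 2c+d$. Accumulator: deterministic $\texttt{Eval}(ak,\mathcal{D})$ gives accumulation value $z$; $\texttt{CreateWit}(ak,z,d)$ gives a witness for $d\in\mathcal{D}$; $\texttt{Verify}(ak,z,w,d)$ accepts honestly generated witnesses; collision-free: a PPT adversary cannot find $\mathcal{D}$, $d'\notin\mathcal{D}$ and $w'$ with $\texttt{Verify}(ak,\texttt{Eval}(ak,\mathcal{D}),w',d')$ true except with negligible probability. Subroutines (with $b=n-t$): $\texttt{Encode}(m,b)$ splits $m$ into $b$ equal blocks, computes $(s_1,\dots,s_n)=\texttt{ENC}(\text{blocks})$, returns $((1,s_1),\dots,(n,s_n))$. $\texttt{Distribute}(\mathcal{D},ak,z)$: send $(s_j,\texttt{CreateWit}(ak,z,(j,s_j)))$ to each $P_j$. $\texttt{Reconstruct}(\mathcal{S},ak,z,d_0)$: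 erase every $s_j$ whose witness fails $\texttt{Verify}(ak,z,w_j,(j,s_j))$ (or is missing), apply $\texttt{DEC}$ with $c=0,d=d_0$, return concatenated blocks. Protocol for $P_i$ with input $m_i$: (1) $\mathcal{D}_i=\texttt{Encode}(m_i,b)$, $z_i=\texttt{Eval}(ak,\mathcal{D}_i)$; input $z_i$ to a $k$-bit BA oracle. (2) On output $z$, $happy_i=1$ iff $z=z_i$; input $happy_i$ to a 1-bit BA oracle. (3) If it outputs $0$, output $\bot$ and abort; if $1$ and $happy_i=1$, invoke $\texttt{Distribute}(\mathcal{D}_i,ak,z)$. (4) If some received pair $(s_i,w_i)$ satisfies $\texttt{Verify}(ak,z,w_i,(i,s_i))$, send it to all parties. (5) If $happy_i=1$ set $o_i=m_i$, else $o_i=\texttt{Reconstruct}(\mathcal{S}_i,ak,z,t)$ where $\mathcal{S}_i$ consists of the pairs received from each $P_j$ in step 4. (6) Output $o_i$. *)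

(* Defs.v *)
From mathcomp Require Import all_boot.
Set Implicit Arguments. Unset Strict Implicit. Unset Printing Implicit Defensive.

Section Protocol.
(* n parties 'I_n, corruption bound t, code dimension b = n - t *)
Variables (n t : nat).
Local Notation b := (n - t).
(* Msg: messages; Sym: code symbols (= blocks); Z: accumulation values (k-bit);
   AK: accumulator keys; W: witnesses *)
Variables (Msg : Type) (Sym Z : eqType) (AK W : Type).
Variables (split : Msg -> b.-tuple Sym) (concat : b.-tuple Sym -> Msg).
(* the (Reed-Solomon) code: ENC maps b data symbols to n codeword symbols;
   DEC r c d : decode received word r (None = erasure) with parameters c, d *)
Variables (ENC : b.-tuple Sym -> 'I_n -> Sym)
          (DEC : ('I_n -> option Sym) -> nat -> nat -> b.-tuple Sym).
Variables (AccEval : AK -> seq ('I_n * Sym) -> Z)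
          (CreateWit : AK -> Z -> 'I_n * Sym -> W)
          (Verify : AK -> Z -> W -> 'I_n * Sym -> bool).

Definition decodes_correctly : Prop :=
  forall (x : b.-tuple Sym) (r : 'I_n -> option Sym) (c d : nat),
    2 * c + d <= n - b ->
    #|[set j | r j == None]| <= d ->
    #|[set j | (r j != None) && (r j != Some (ENC x j))]| <= c ->
    DEC r c d = x.

Definition acc_correct : Prop :=
  forall (ak : AK) (D : seq ('I_n * Sym)) (d : 'I_n * Sym),
    d \in D -> Verify ak (AccEval ak D) (CreateWit ak (AccEval ak D) d) d.

Definition Encode (m : Msg) : seq ('I_n * Sym) :=
  [seq (j, ENC (split m) j) | j <- enum 'I_n].

Definition ba_valid (C : {set 'I_n}) (T : eqType) (inp : 'I_n -> T) (out : T) : Prop :=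
  forall v, (forall i, i \notin C -> inp i = v) -> out = v.

(* ---- one execution ----
   ak : accumulator key; C : corrupted parties; m : inputs;
   zout : output of the k-bit BA oracle; hout : output of the 1-bit BA oracle;
   adv3 i j / adv4 i j : what corrupted party i sends to j in step 3 / 4;
   sel4 j : the verifying pair (if any) honest party j forwards in step 4. *)
Variables (ak : AK) (C : {set 'I_n}) (m : 'I_n -> Msg) (zout : Z) (hout : bool)
          (adv3 adv4 : 'I_n -> 'I_n -> option (Sym * W))
          (sel4 : 'I_n -> option (Sym * W)).

Definition D_of (i : 'I_n) : seq ('I_n * Sym) := Encode (m i).
Definition z_of (i : 'I_n) : Z := AccEval ak (D_of i).
Definition happy (i : 'I_n) : bool := zout == z_of i.

Definition recv3 (i j : 'I_n) : option (Sym * W) :=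
  if i \in C then adv3 i j
  else if hout && happy i then
         Some (ENC (split (m i)) j, CreateWit ak zout (j, ENC (split (m i)) j))
       else None.

Definition sel4_ok : Prop :=
  forall j, j \notin C ->
    (forall p, sel4 j = Some p ->
       (exists i, recv3 i j = Some p) /\ Verify ak zout p.2 (j, p.1)) /\
    ((exists i p, recv3 i j = Some p /\ Verify ak zout p.2 (j, p.1)) ->
       sel4 j <> None).

(* the pair received by i from j in step 4 *)
Definition recv4 (j i : 'I_n) : option (Sym * W) :=
  if j \in C then adv4 j i else sel4 j.

Definition reconstruct (i : 'I_n) : Msg :=
  concat (DEC (fun j => match recv4 j i with
                        | Some (s, w) => if Verify ak zout w (j, s) then Some s else None
                        | None => None
                        end) 0 t).

(* output of party i; None stands for bottom *)
Definition output (i : 'I_n) : option Msg :=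
  if ~~ hout then None
  else if happy i then Some (m i)
  else Some (reconstruct i).

Definition collision_found : Prop :=
  exists i, [/\ i \notin C, happy i &
    exists snd rcv p,
      (recv3 snd rcv = Some p /\ Verify ak zout p.2 (rcv, p.1) /\ (rcv, p.1) \notin D_of i)
   \/ (recv4 snd rcv = Some p /\ Verify ak zout p.2 (snd, p.1) /\ (snd, p.1) \notin D_of i)].

End Protocol.

(* Main.v *)
Require Import Defs.
From mathcomp Require Import all_boot.
From Stdlib Require Import Classical.

Theorem mainTheorem3 (n t : nat) (Msg : Type) (Sym Z : eqType) (AK W : Type)
  (split : Msg -> (n - t).-tuple Sym) (concat : (n - t).-tuple Sym -> Msg)
  (ENC : (n - t).-tuple Sym -> 'I_n -> Sym)
  (DEC : ('I_n -> option Sym) -> nat -> nat -> (n - t).-tuple Sym)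
  (AccEval : AK -> seq ('I_n * Sym) -> Z)
  (CreateWit : AK -> Z -> 'I_n * Sym -> W)
  (Verify : AK -> Z -> W -> 'I_n * Sym -> bool) :
  2 * t < n ->
  cancel split concat ->
  decodes_correctly ENC DEC ->
  acc_correct AccEval CreateWit Verify ->
  forall (ak : AK) (C : {set 'I_n}) (m : 'I_n -> Msg) (zout : Z) (hout : bool)
         (adv3 adv4 : 'I_n -> 'I_n -> option (Sym * W))
         (sel4 : 'I_n -> option (Sym * W)),
    #|C| <= t ->
    ba_valid C (z_of split ENC AccEval ak m) zout ->
    ba_valid C (happy split ENC AccEval ak m zout) hout ->
    sel4_ok split ENC AccEval CreateWit Verify ak C m zout hout adv3 sel4 ->
    (forall i j, i \notin C -> j \notin C ->
       output split concat ENC DEC AccEval Verify ak C m zout hout adv4 sel4 i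
       = output split concat ENC DEC AccEval Verify ak C m zout hout adv4 sel4 j)
    \/ collision_found split ENC AccEval CreateWit Verify ak C m zout hout adv3 adv4 sel4.
Proof.
move=> ht hsc hdec hacc ak C m zout hout adv3 adv4 sel4 hC hz hh hsel.
case: (classic (collision_found split ENC AccEval CreateWit Verify ak C m zout hout adv3 adv4 sel4)) => [col|ncol]; [by right|left].
have memE : forall mm j s, ((j, s) \in Encode split ENC mm) = (s == ENC (split mm) j).
  move=> mm j s; apply/idP/idP.
    by case/mapP=> k _ [-> ->].
  by move/eqP->; apply: map_f; rewrite mem_enum.
have encinj : forall x y, (forall j, ENC x j = ENC y j) -> x = y.
  move=> x y exy.
  have d0 : forall z, (forall j, ENC z j = ENC y j) -> DEC (fun j => Some (ENC y j)) 0 0 = z.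
    move=> z ez; apply: hdec => //.
      by rewrite leqn0 cards_eq0; apply/eqP/setP => j; rewrite !inE.
    by rewrite leqn0 cards_eq0; apply/eqP/setP => j; rewrite !inE ez eqxx andbF.
  by rewrite -(d0 x exy); apply: d0.
have H3 : forall i, i \notin C -> happy split ENC AccEval ak m zout i ->
    forall snd rcv p, recv3 split ENC AccEval CreateWit ak C m zout hout adv3 snd rcv = Some p ->
    Verify ak zout p.2 (rcv, p.1) -> (rcv, p.1) \in D_of split ENC m i.
  move=> i iC hi snd rcv p r3 v; apply/negPn/negP => nin; apply: ncol.
  exists i; split => //; exists snd, rcv, p; by left.
have H4 : forall i, i \notin C -> happy split ENC AccEval ak m zout i ->
    forall snd rcv p, recv4 C adv4 sel4 snd rcv = Some p ->
    Verify ak zout p.2 (snd, p.1) -> (snd, p.1) \in D_of split ENC m i.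
  move=> i iC hi snd rcv p r3 v; apply/negPn/negP => nin; apply: ncol.
  exists i; split => //; exists snd, rcv, p; by right.
case hob: hout; last first.
  by move=> i j _ _; rewrite /output.
have [i0 [i0C hi0]] : exists i0, i0 \notin C /\ happy split ENC AccEval ak m zout i0.
  case: (pickP (fun i => (i \notin C) && happy split ENC AccEval ak m zout i)) => [k /andP[] kC hk|none].
    by exists k.
  have H : forall x, x \notin C -> happy split ENC AccEval ak m zout x = false.
    by move=> x xC; have := none x; rewrite xC.
  by have := hh false H; rewrite hob.
have Hsame : forall k, k \notin C -> happy split ENC AccEval ak m zout k -> m k = m i0.
  move=> k kC hk; rewrite -(hsc (m k)) -(hsc (m i0)); congr concat; apply: encinj => r.
  have := H3 i0 i0C hi0 k r (ENC (split (m k)) r, CreateWit ak zout (r, ENC (split (m k)) r)).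
  rewrite /recv3 (negbTE kC) hob hk /= => /(_ erefl).
  have -> : Verify ak zout (CreateWit ak zout (r, ENC (split (m k)) r)) (r, ENC (split (m k)) r).
    rewrite (eqP hk) /z_of; apply: hacc; by rewrite /D_of memE.
  by rewrite /D_of memE => /(_ isT) /eqP.
have Hout : forall k, k \notin C ->
    output split concat ENC DEC AccEval Verify ak C m zout true adv4 sel4 k = Some (m i0).
  move=> k kC; rewrite /output /=.
  case hk: (happy split ENC AccEval ak m zout k); first by rewrite (Hsame k kC hk).
  congr Some; rewrite /reconstruct -[in RHS](hsc (m i0)); congr concat; apply: hdec.
  - rewrite muln0 add0n subKn //; apply: ltnW; apply: leq_ltn_trans ht; by rewrite leq_pmull.
  - apply: leq_trans hC; apply: subset_leq_card; apply/subsetP => j; rewrite inE.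
    apply: contraLR => jC; rewrite /recv4 (negbTE jC).
    have [Ha Hb] := hsel j jC.
    have hv : Verify ak zout (CreateWit ak zout (j, ENC (split (m i0)) j)) (j, ENC (split (m i0)) j).
      rewrite (eqP hi0) /z_of; apply: hacc; by rewrite /D_of memE.
    case e: (sel4 j) => [[s w]|]; last first.
      exfalso; apply: Hb e; exists i0, (ENC (split (m i0)) j, CreateWit ak zout (j, ENC (split (m i0)) j)).
      by rewrite /recv3 (negbTE i0C) hob hi0.
    have [_ /= ->] := Ha _ e; by [].
  - rewrite leqn0 cards_eq0; apply/eqP/setP => j; rewrite !inE.
    case e: (recv4 C adv4 sel4 j k) => [[s w]|] //=.
    case v: (Verify ak zout w (j, s)) => //=.
    have := H4 i0 i0C hi0 j k (s, w) e v; rewrite /D_of /= memE => /eqP ->; by rewrite eqxx.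
by move=> i j iC jC; rewrite !Hout.
Qed.
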